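(* In the planted clique setting below with $\rho\in(0,1)$, the vector $w$ satisfies $w_0=\rho$ and, for every graph $\alpha$ with $|\alpha|\ge1$, \[ |w_\alpha|\le(|\alpha|+1)^{|\alpha|}(1-\rho)^{-2|\alpha|^2}\rho^{|V(\alpha)|}. \]
   Context: Let $v\in\{0,1\}^n$ have i.i.d. $\mathrm{Bernoulli}(\rho)$ entries and let the clique edge set be $X=\{\{i,j\}: i<j,\ v_iv_j=1\}$. Index vectors $\alpha\in\{0,1\}^{\binom n2}$ are identified with (simple) graphs on vertex set $[n]$; $|\alpha|$ is the number of edges, $V(\alpha)$ the set of vertices spanned by the edges, $\beta\le\alpha$ means $\beta$ is a subgraph of $\alpha$ (edge sets), and $\beta\lneq\alpha$ means a proper subgraph. Define $c_\alpha=\rho^{|V(\alpha)\cup\{1\}|}$ and $M_{\beta\alpha}=\mathbf{1}_{\beta\le\alpha}\Pr[\alpha\setminus X=\beta]$, where $\alpha\setminus X$ is the set of edges of $\alpha$ that are not in $X$. Define $w_\alpha$ recursively (over graphs of increasing size) by $w_\alpha=\frac{1}{M_{\alpha\alpha}}\big(c_\alpha-\sum_{\beta\lneq\alpha}w_\beta M_{\beta\alpha}\big)$. *)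

(* Defs.v *)
From HB Require Import structures.
From mathcomp Require Import all_boot all_order all_algebra.
Set Implicit Arguments. Unset Strict Implicit. Unset Printing Implicit Defensive.
Import Order.TTheory GRing.Theory Num.Theory.
Local Open Scope ring_scope.

(* Vertex set [n] is 'I_n.  An edge {i,j} with i<j is an ordered pair (i,j)
   with i < j; a (simple) graph alpha is a set of edges. *)
Definition edge (n : nat) := {e : 'I_n * 'I_n | (e.1 < e.2)%N}.
Definition graph (n : nat) := {set edge n}.

Definition Vg n (a : graph n) : {set 'I_n} :=
  \bigcup_(e in a) [set (val e).1; (val e).2].

Definition cliqueX n (v : {ffun 'I_n -> bool}) : graph n :=
  [set e : edge n | v (val e).1 && v (val e).2].

Section Planted.
Variables (R : realFieldType) (n : nat) (rho : R) (one : 'I_n).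

Definition prob_v (v : {ffun 'I_n -> bool}) : R :=
  \prod_(i : 'I_n) (if v i then rho else 1 - rho).

Definition PrDiff (a b : graph n) : R :=
  \sum_(v : {ffun 'I_n -> bool}) prob_v v * ((a :\: cliqueX v) == b)%:R.

Definition Mmat (b a : graph n) : R := (b \subset a)%:R * PrDiff a b.

Definition cvec (a : graph n) : R := rho ^+ #|Vg a :|: [set one]|.

(* Recursion with fuel k; w_alpha is obtained with fuel |alpha|
   (proper subgraphs have strictly fewer edges). *)
Fixpoint wrec (k : nat) (a : graph n) : R :=
  match k with
  | 0 => (Mmat a a)^-1 * cvec a
  | k'.+1 => (Mmat a a)^-1 *
      (cvec a - \sum_(b : graph n | b \proper a) wrec k' b * Mmat b a)
  end.

Definition wvec (a : graph n) : R := wrec #|a| a.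

End Planted.

(* Main.v *)
Require Import Defs.
From HB Require Import structures.
From mathcomp Require Import all_boot all_order all_algebra.
From mathcomp Require Import zify ring lra.
Import Order.TTheory GRing.Theory Num.Theory.
Local Open Scope ring_scope.
Lemma sum_subsets (R : comNzRingType) (T : finType) (A : {set T}) (x : R) :
  \sum_(B : {set T} | B \subset A) x ^+ #|B| = (x + 1) ^+ #|A|.
Proof.
rewrite -prodr_const; symmetry.
rewrite (big_mkcond (fun i => i \in A)) /=.
transitivity (\prod_(i : T) ((if i \in A then x else 0) + 1)).
  1: by apply: eq_bigr => i _; case: (i \in A); rewrite ?add0r.
rewrite (@bigA_distr R 0 1 *%R +%R) /=.
rewrite [RHS](big_mkcond (fun B : {set T} => B \subset A)) /=.
apply: eq_bigr => B _.
case: ifP => sBA.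
  rewrite -prodr_const (big_mkcond (fun i => i \in B)) /=.
  apply: eq_bigr => i _; case: ifP => // iB.
  by rewrite (subsetP sBA i iB).
move/negbT: sBA => /subsetPn [i iB iA].
rewrite (bigD1 i) //= iB (negbTE iA) mul0r //.
Qed.

Section S.
Variables (R : realFieldType) (n : nat) (rho : R).
Hypotheses (hrho0 : 0 < rho) (hrho1 : rho < 1).

Lemma prob_fix (S : {set 'I_n}) (b : bool) :
  \sum_(v : {ffun 'I_n -> bool}) prob_v rho v * [forall i in S, v i == b]%:R
  = (if b then rho else 1 - rho) ^+ #|S|.
Proof.
rewrite -prodr_const (big_mkcond (fun i => i \in S)) /=.
transitivity (\prod_(i : 'I_n) \sum_(c : bool)
   ((if c then rho else 1 - rho) * (if i \in S then (c == b)%:R else 1))); last first.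
  apply: eq_bigr => i _; rewrite big_bool /=.
  by case: (i \in S); case: b; rewrite /= ?mulr1 ?mulr0 ?addr0 ?add0r //; ring.
rewrite bigA_distr_bigA /=; apply: eq_bigr => v _.
rewrite big_split /=; congr (_ * _).
case: (boolP [forall i in S, v i == b]) => [/forallP all|/forallPn[i]].
  symmetry; apply: big1 => i _; case: ifP => // iS.
  by move/implyP: (all i) => /(_ iS) ->.
rewrite negb_imply => /andP[iS vb].
by rewrite (bigD1 i) //= iS (negbTE vb) mul0r.
Qed.

Lemma prob_ge0 (v : {ffun 'I_n -> bool}) : 0 <= prob_v rho v.
Proof. rewrite /prob_v; apply: prodr_ge0 => i _; case: (v i); [exact: ltW | rewrite subr_ge0; exact: ltW]. Qed.


Lemma VgP (a : graph n) i :
  reflect (exists2 e, e \in a & (i = (val e).1 \/ i = (val e).2)) (i \in Vg a).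
Proof.
apply: (iffP bigcupP) => [[e ea]|[e ea h]]; last first.
  by exists e => //; rewrite !inE; case: h => ->; rewrite eqxx ?orbT.
by rewrite !inE => /orP[] /eqP ->; exists e => //; [left|right].
Qed.

Lemma Vg0 : Vg (set0 : graph n) = set0.
Proof. by apply/setP => i; rewrite inE; apply/VgP => -[e]; rewrite inE. Qed.

Lemma Vg_card (a : graph n) : (#|Vg a| <= 2 * #|a|)%N.
Proof.
have sub : Vg a \subset [set (val e).1 | e in a] :|: [set (val e).2 | e in a].
  apply/subsetP => i /VgP [e ea [->|->]]; rewrite inE; apply/orP; [left|right];
  by apply/imsetP; exists e.
apply: leq_trans (subset_leq_card sub) _.
apply: leq_trans (leq_card_setU _ _).1 _.
by rewrite mul2n -addnn leq_add // leq_imset_card.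
Qed.

Lemma Vg_split (a b : graph n) : (#|Vg a| <= #|Vg b| + #|Vg (a :\: b)|)%N.
Proof.
have sub : Vg a \subset Vg b :|: Vg (a :\: b).
  apply/subsetP => i /VgP [e ea h]; rewrite inE; case: (boolP (e \in b)) => eb.
    by apply/orP; left; apply/VgP; exists e.
  by apply/orP; right; apply/VgP; exists e => //; rewrite inE eb.
exact: leq_trans (subset_leq_card sub) (leq_card_setU _ _).1.
Qed.

Lemma PrDiff_ge0 (a b : graph n) : 0 <= PrDiff rho a b.
Proof. by apply: sumr_ge0 => v _; apply: mulr_ge0; [exact: prob_ge0|exact: ler0n]. Qed.

Lemma Mdiag_ge (a : graph n) : (1 - rho) ^+ #|Vg a| <= PrDiff rho a a.
Proof.
rewrite -(prob_fix _ false) /PrDiff; apply: ler_sum => v _.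
apply: ler_wpM2l; first exact: prob_ge0.
case: (boolP [forall i in Vg a, v i == false]) => [/forallP all|_]; last exact: ler0n.
suff -> : a :\: cliqueX v = a by rewrite eqxx.
apply/setP => e; rewrite !inE; case ea: (e \in a); rewrite ?andbF // andbT.
have /implyP/(_ _)/eqP -> := all (val e).1; first by [].
by apply/VgP; exists e => //; left.
Qed.

Lemma Moff_le (a b : graph n) : PrDiff rho a b <= rho ^+ #|Vg (a :\: b)|.
Proof.
rewrite -(prob_fix _ true) /PrDiff; apply: ler_sum => v _.
apply: ler_wpM2l; first exact: prob_ge0.
case: eqP => [<-|_]; last exact: ler0n.
suff -> : [forall i in Vg (a :\: (a :\: cliqueX v)), v i == true] by [].
apply/forallP => i; apply/implyP => /VgP [e]; rewrite !inE negb_and negbK.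
case/andP => /orP [/andP[h1 h2] _|ena ea]; last by rewrite ea in ena.
by move=> [->|->]; rewrite ?h1 ?h2.
Qed.


Definition gB (j : nat) : R := (j.+1)%:R ^+ j * ((1 - rho) ^+ (2 * j ^ 2))^-1.

Lemma arith (a : graph n) :
  ((1 - rho) ^+ (2 * #|a|))^-1 * (1 + \sum_(b : graph n | b \proper a) gB #|b|)
  <= gB #|a|.
Proof.
set m := #|a|.
set E := (1 - rho)^-1.
have D0 : 0 < 1 - rho by rewrite subr_gt0.
have E1 : 1 <= E by rewrite /E invf_ge1 // lerBlDr lerDl ltW.
have E0 : 0 <= E by exact: le_trans E1.
rewrite /gB -!exprVn; under eq_bigr do rewrite -exprVn; rewrite -/E.
set p := (2 * (m.-1) ^ 2)%N.
have hS : \sum_(b : graph n | b \proper a) (#|b|.+1%:R ^+ #|b| * E ^+ (2 * #|b| ^ 2))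
   <= E ^+ p * ((m.+1)%:R ^+ m - m%:R ^+ m).
  have -> : (m.+1)%:R ^+ m - m%:R ^+ m =
     \sum_(b : graph n | b \proper a) (m%:R : R) ^+ #|b|.
    rewrite -[(m.+1)%:R]natr1 -(sum_subsets _ _ a) (bigD1 a) //= -/m addrC addrK.
    by apply: eq_bigl => b; rewrite properEneq andbC.
  rewrite big_distrr /=; apply: ler_sum => b ba.
  rewrite mulrC; apply: ler_pM.
  - by apply: exprn_ge0.
  - by apply: exprn_ge0.
  - apply: ler_weXn2l => //.
    have hb : (#|b| <= m.-1)%N.
      have := proper_card ba; rewrite -/m; lia.
    by rewrite /p leq_mul2l leq_sqr hb orbT.
  - apply: lerXn2r; rewrite ?nnegrE ?ler0n // ler_nat.
    exact: proper_card ba.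
have hZ : 1 <= E ^+ p * m%:R ^+ m.
  rewrite -[X in X <= _]mulr1; apply: ler_pM => //; first exact: exprn_ege1.
  rewrite -natrX (ler_nat R 1); rewrite expn_gt0; case: (m) => //.
have hpow : E ^+ (2 * m) * E ^+ p <= E ^+ (2 * m ^ 2).
  rewrite -exprD; apply: ler_weXn2l => //.
  rewrite /p; case: (m) => [|k] //=; rewrite !expnS !expn0; lia.
have F0 : 0 <= E ^+ (2 * m) by apply: exprn_ge0.
have Y0 : 0 <= (m.+1)%:R ^+ m :> R by apply: exprn_ge0.
apply: le_trans (_ : E ^+ (2 * m) * (E ^+ p * (m.+1)%:R ^+ m) <= _).
  apply: ler_wpM2l => //.
  apply: le_trans (_ : 1 + E ^+ p * ((m.+1)%:R ^+ m - m%:R ^+ m) <= _).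
    by rewrite lerD2l.
  by rewrite mulrBr addrCA gerDl subr_le0.
rewrite mulrA mulrC; apply: ler_wpM2l => //.
Qed.


Variable one : 'I_n.

Lemma Mmat00 : Mmat rho (set0 : graph n) set0 = 1.
Proof.
rewrite /Mmat subxx mul1r /PrDiff.
transitivity ((if true then rho else 1 - rho) ^+ #|(set0 : {set 'I_n})|); last by rewrite cards0 expr0.
rewrite -(prob_fix set0 true).
apply: eq_bigr => v _; rewrite set0D eqxx.
have h : [forall i in (set0 : {set 'I_n}), v i == true].
  by apply/forallP => i; rewrite inE.
by rewrite h.
Qed.

Lemma w00 : wrec rho one 0 set0 = rho.
Proof.
by rewrite /= Mmat00 invr1 mul1r /cvec Vg0 set0U cards1 expr1.
Qed.

Lemma cvec_le (a : graph n) : cvec rho one a <= rho ^+ #|Vg a|.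
Proof.
apply: ler_wiXn2l; [exact: ltW|exact: ltW|].
by apply: subset_leq_card; apply: subsetUl.
Qed.

Lemma Mdiag_lb (a : graph n) : (1 - rho) ^+ (2 * #|a|) <= Mmat rho a a.
Proof.
rewrite /Mmat subxx mul1r; apply: le_trans _ (Mdiag_ge a).
apply: ler_wiXn2l; [by rewrite subr_ge0 ltW|by rewrite lerBlDr lerDl ltW|].
exact: Vg_card.
Qed.

Lemma wbound k : forall a : graph n, (#|a| <= k)%N ->
  `|wrec rho one k a| <= gB #|a| * rho ^+ #|Vg a|.
Proof.
have D0 : 0 < 1 - rho by rewrite subr_gt0.
elim: k => [|k IH] a ha.
  have a0 : a = set0 by apply/cards0_eq; lia.
  subst a; rewrite w00 cards0 Vg0 cards0 /gB.
  have -> : (2 * 0 ^ 2 = 0)%N by [].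
  by rewrite !expr0 invr1 !mul1r ger0_norm ltW.
set m := #|a|.
have Dp : 0 < (1 - rho) ^+ (2 * m) by apply: exprn_gt0.
have Mlb := Mdiag_lb a.
have Mpos : 0 < Mmat rho a a by apply: lt_le_trans Mlb.
have g0 : forall j, 0 <= gB j.
  move=> j; apply: mulr_ge0; first exact: exprn_ge0 (ler0n _ _).
  by rewrite invr_ge0; apply: exprn_ge0; exact: ltW D0.
rewrite /= normrM ger0_norm; last by rewrite invr_ge0 ltW.
apply: (@le_trans _ _ ((Mmat rho a a)^-1 *
   (rho ^+ #|Vg a| + \sum_(b : graph n | b \proper a) gB #|b| * rho ^+ #|Vg a|))).
  apply: ler_wpM2l; first by rewrite invr_ge0 ltW.
  apply: le_trans (ler_normB _ _) _; apply: lerD.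
    rewrite ger0_norm; [exact: cvec_le | by rewrite /cvec exprn_ge0 // ltW].
  apply: le_trans (ler_norm_sum _ _ _) _; apply: ler_sum => b ba.
  have sba := proper_sub ba.
  rewrite normrM [`|Mmat _ _ _|]ger0_norm; last first.
    by rewrite /Mmat sba mul1r PrDiff_ge0.
  apply: (@le_trans _ _ (gB #|b| * rho ^+ #|Vg b| * rho ^+ #|Vg (a :\: b)|)).
    apply: ler_pM.
    - exact: normr_ge0.
    - by rewrite /Mmat sba mul1r PrDiff_ge0.
    - apply: IH; have := proper_card ba; rewrite -/m; lia.
    - by rewrite /Mmat sba mul1r Moff_le.
  rewrite -mulrA -exprD; apply: ler_wpM2l; first exact: g0.
  apply: ler_wiXn2l; [exact: ltW|exact: ltW|exact: Vg_split].
rewrite -big_distrl /= -[X in X + _]mul1r -mulrDl mulrA.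
apply: ler_wpM2r; first by apply: exprn_ge0; exact: ltW.
apply: le_trans (arith a).
apply: ler_wpM2r.
  by apply: addr_ge0 => //; apply: sumr_ge0 => b _; exact: g0.
by rewrite lef_pV2 ?posrE.
Qed.

End S.

Theorem mainTheorem9 (R : realFieldType) (n : nat) (hn : (0 < n)%N) (rho : R)
  (hrho0 : 0 < rho) (hrho1 : rho < 1) :
  wvec rho (Ordinal hn) set0 = rho /\
  (forall a : graph n, (1 <= #|a|)%N ->
     `|wvec rho (Ordinal hn) a| <=
       (#|a|.+1)%:R ^+ #|a| * ((1 - rho) ^+ (2 * #|a| ^ 2))^-1
         * rho ^+ #|Vg a|).
Proof.
split; first by rewrite /wvec cards0 w00.
by move=> a _; rewrite /wvec; exact: (@wbound R n rho hrho0 hrho1 (Ordinal hn) #|a| a (leqnn #|a|)).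
Qed.
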